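(* Let $K\subset\mathbb{R}^n$ be closed and consider $\Sigma:\ \dot x\in F(x),\ x\in C$, satisfying (SA), such that $F(y)\subset T_K(y)$ for all $y\in\partial K\cap\operatorname{int}(C)$. Let $\phi$ be a solution to $\Sigma$ with $\phi(0)=x\in\partial K$ satisfying property $(\star)$ with some $T>0$. Then $\phi([0,T])\subset K$; in particular $\phi$ does not leave $K$ immediately.
   Context: Standing assumption (SA): $C \subset \mathbb{R}^n$ is closed; $F:\mathbb{R}^n \rightrightarrows \mathbb{R}^n$ has $F(x)$ nonempty, closed and convex for all $x \in C$; $F$ is continuous (upper and lower semicontinuous) and one-sided locally Lipschitz: for every nonempty compact $\mathcal{N} \subset \operatorname{dom} F$ there is $k>0$ with $(x_1-x_2)^\top F(x_1) \subset (x_1-x_2)^\top F(x_2) + k|x_1-x_2|^2\mathbb{B}$ for all $x_1,x_2 \in \mathcal{N}$ ($\mathbb{B}$ the closed unit ball). Solutions: $\phi$ is locally absolutely continuous with values in $C$, $\operatorname{dom}\phi=[0,T]$ ($T\ge0$) or $[0,T)$ ($T\in\mathbb{R}_{\ge0}\cup\{+\infty\}$), and $\dot\phi(t)\in F(\phi(t))$ for a.e. $t\in\operatorname{dom}\phi$. A solution $\phi$ with $\phi(0)=x$ leaves $K$ immediately if there is $T>0$ with $\phi((0,T])\subset C\setminus K$. Property $(\star)$ for a solution $\phi$: there exists $T>0$ with $(0,T]\subset\operatorname{dom}\phi$ such that $\operatorname{Proj}_{\partial K}(\phi(t))\cap\operatorname{int}(C)\neq\emptyset$ for all $t\in(0,T]$,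 where $\operatorname{Proj}_{S}(z)$ denotes the set of points of $S$ at minimal Euclidean distance from $z$. Contingent cone: $T_S(x)=\{v: \exists t_i\to 0^+, \exists v_i\to v,\ x+t_iv_i\in S\}$. *)

(* Defs.v *)
From HB Require Import structures.
From mathcomp Require Import all_boot all_order all_algebra.
From mathcomp Require Import all_classical all_reals all_analysis.
Set Implicit Arguments. Unset Strict Implicit. Unset Printing Implicit Defensive.
Import Order.TTheory GRing.Theory Num.Theory.
Import numFieldNormedType.Exports.
Local Open Scope classical_set_scope.
Local Open Scope ring_scope.

Section Defs.
Variables (R : realType) (n : nat).
Local Notation V := 'rV[R]_n.

Definition dotv (x y : V) : R := \sum_(i < n) x ord0 i * y ord0 i.
Definition enorm (x : V) : R := Num.sqrt (dotv x x).

Definition boundary (K : set V) : set V := closure K `\` interior K.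

Definition convex_vset (A : set V) : Prop :=
  forall x y (l : R), A x -> A y -> 0 <= l -> l <= 1 -> A (l *: x + (1 - l) *: y).

Definition domF (F : V -> set V) : set V := [set x | F x !=set0].

Definition usc_at (C : set V) (F : V -> set V) (x : V) : Prop :=
  forall U : set V, open U -> F x `<=` U ->
    \forall y \near x, C y -> F y `<=` U.
Definition lsc_at (C : set V) (F : V -> set V) (x : V) : Prop :=
  forall U : set V, open U -> F x `&` U !=set0 ->
    \forall y \near x, C y -> F y `&` U !=set0.

(* one-sided local Lipschitz property:
   (x1-x2)^T F(x1) ⊂ (x1-x2)^T F(x2) + k|x1-x2|^2 B *)
Definition one_sided_loc_lipschitz (F : V -> set V) : Prop :=
  forall N : set V, N !=set0 -> compact N -> N `<=` domF F ->
    exists k : R, 0 < k /\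
      forall x1 x2, N x1 -> N x2 ->
        forall v1, F x1 v1 ->
          exists v2, F x2 v2 /\ exists b : R, -1 <= b <= 1 /\
            dotv (x1 - x2) v1 = dotv (x1 - x2) v2 + k * enorm (x1 - x2) ^+ 2 * b.

Definition standing_assumption (C : set V) (F : V -> set V) : Prop :=
  [/\ closed C,
      (forall x, C x -> F x !=set0 /\ closed (F x) /\ convex_vset (F x)),
      (forall x, C x -> usc_at C F x /\ lsc_at C F x)
    & one_sided_loc_lipschitz F].

Definition abs_cont_on (phi : R -> V) (a b : R) : Prop :=
  forall e : R, 0 < e -> exists d : R, 0 < d /\
    forall (m : nat) (s t : 'I_m -> R),
      (forall i, a <= s i /\ s i <= t i /\ t i <= b) ->
      (forall i j, i != j -> t i <= s j \/ t j <= s i) ->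
      \sum_(i < m) (t i - s i) < d ->
      \sum_(i < m) enorm (phi (t i) - phi (s i)) < e.

Definition loc_abs_cont_on (phi : R -> V) (D : set R) : Prop :=
  forall a b, a <= b -> [set t | a <= t <= b] `<=` D -> abs_cont_on phi a b.

Definition solution_domain (D : set R) : Prop :=
  (exists T : R, 0 <= T /\ D = [set t | 0 <= t <= T]) \/
  (exists T : \bar R, (0 <= T)%E /\ D = [set t | 0 <= t /\ (t%:E < T)%E]).

Definition is_solution (C : set V) (F : V -> set V) (phi : R -> V) (D : set R) : Prop :=
  [/\ solution_domain D,
      loc_abs_cont_on phi D,
      (forall t, D t -> C (phi t))
    & \forall t \ae (@lebesgue_measure R),
        D t -> derivable phi t 1 /\ F (phi t) ('D_1 phi t)].

Definition leaves_immediately (C K : set V) (phi : R -> V) (D : set R) : Prop :=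
  exists T : R, 0 < T /\ [set t | 0 < t <= T] `<=` D /\
    (forall t, 0 < t <= T -> (C `\` K) (phi t)).

Definition Proj (S : set V) (z : V) : set V :=
  [set y | S y /\ forall w, S w -> enorm (z - y) <= enorm (z - w)].

Definition contingent (S : set V) (x : V) : set V :=
  [set v | exists (t : nat -> R) (w : nat -> V),
     (forall i, 0 < t i) /\ t @ \oo --> 0 /\ w @ \oo --> v /\
     (forall i, S (x + t i *: w i))].

End Defs.

(* Main.v *)
Require Import Defs.
From HB Require Import structures.
From mathcomp Require Import all_boot all_order all_algebra.
From mathcomp Require Import all_classical all_reals all_analysis.
From mathcomp Require Import ring lra.
Import Order.TTheory GRing.Theory Num.Theory.
Import numFieldNormedType.Exports.
Local Open Scope classical_set_scope.
Local Open Scope ring_scope.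
Set Implicit Arguments. Unset Strict Implicit.

Section Vec.
Variables (R : realType) (n : nat).
Local Notation V := 'rV[R]_n.
Implicit Types x y z a b c : V.

Lemma dotvC a b : dotv a b = dotv b a.
Proof. by rewrite /dotv; apply: eq_bigr => i _; rewrite mulrC. Qed.

Lemma dotvDr a b c : dotv a (b + c) = dotv a b + dotv a c.
Proof. by rewrite /dotv -big_split; apply: eq_bigr => i _; rewrite mxE mulrDr. Qed.

Lemma dotvDl a b c : dotv (b + c) a = dotv b a + dotv c a.
Proof. by rewrite dotvC dotvDr !(dotvC a). Qed.

Lemma dotvZr (l : R) a b : dotv a (l *: b) = l * dotv a b.
Proof. by rewrite /dotv mulr_sumr; apply: eq_bigr => i _; rewrite mxE; ring. Qed.

Lemma dotvNr a b : dotv a (- b) = - dotv a b.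
Proof. by rewrite -scaleN1r dotvZr mulN1r. Qed.

Lemma dotvNl a b : dotv (- a) b = - dotv a b.
Proof. by rewrite dotvC dotvNr dotvC. Qed.

Lemma dotv0r a : dotv a 0 = 0.
Proof. by rewrite /dotv big1 // => i _; rewrite mxE mulr0. Qed.

Lemma dotv_ge0 x : 0 <= dotv x x.
Proof. by rewrite /dotv sumr_ge0 // => i _; rewrite -expr2 sqr_ge0. Qed.

Lemma dotv_sq a b : dotv (a + b) (a + b) = dotv a a + 2 * dotv a b + dotv b b.
Proof. rewrite dotvDl !dotvDr (dotvC b a); ring. Qed.

Lemma coord_le_norm x i : `|x ord0 i| <= `|x|.
Proof.
rewrite [leRHS]/Num.norm /= mx_normrE.
exact: (@le_bigmax _ _ _ 0 (fun ij : 'I_1 * 'I_n => `|x ij.1 ij.2|) (ord0, i)).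
Qed.

Lemma norm_le_coord x r : 0 <= r -> (forall i, `|x ord0 i| <= r) -> `|x| <= r.
Proof.
move=> r0 H; rewrite [leLHS]/Num.norm /= mx_normrE; apply: bigmax_le => // -[i j] _ /=.
by rewrite (ord1 i); apply: H.
Qed.

Lemma coord_sq_le x i : x ord0 i ^+ 2 <= dotv x x.
Proof.
rewrite /dotv (bigD1 i) //= -expr2 lerDl sumr_ge0 // => j _.
by rewrite -expr2 sqr_ge0.
Qed.

Lemma dotv_le a b : `|dotv a b| <= n%:R * (`|a| * `|b|).
Proof.
rewrite /dotv; apply: le_trans (ler_norm_sum _ _ _) _.
rewrite mulr_natl -[n in _ *+ n]card_ord -sumr_const; apply: ler_sum => i _.
by rewrite normrM ler_pM ?coord_le_norm.
Qed.

Lemma enorm_sq x : enorm x ^+ 2 = dotv x x.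
Proof. by rewrite /enorm sqr_sqrtr // dotv_ge0. Qed.

Lemma enorm_ge0 x : 0 <= enorm x.
Proof. exact: sqrtr_ge0. Qed.

Lemma norm_le_sq x r : 0 <= r -> dotv x x <= r ^+ 2 -> `|x| <= r.
Proof.
move=> r0 H; apply: norm_le_coord => // i.
rewrite -(ler_pXn2r (_ : (0 < 2)%N)) ?nnegrE // ?normr_ge0 //.
by rewrite real_normK ?num_real // (le_trans (coord_sq_le x i)).
Qed.

Lemma norm_le_enorm x : `|x| <= enorm x.
Proof. by apply: norm_le_sq; rewrite ?enorm_ge0 // enorm_sq. Qed.

Lemma dotv_sq_le x : dotv x x <= n%:R * `|x| ^+ 2.
Proof. by rewrite expr2; apply: le_trans (ler_norm _) (dotv_le x x). Qed.

End Vec.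

Section Mono.
Variable R : realType.

Definition HAC (H : R -> R) (a b : R) :=
  forall e : R, 0 < e -> exists d : R, 0 < d /\
    forall (m : nat) (s t : 'I_m -> R),
      (forall i, a <= s i /\ s i <= t i /\ t i <= b) ->
      (forall i j, i != j -> t i <= s j \/ t j <= s i) ->
      \sum_(i < m) (t i - s i) < d ->
      \sum_(i < m) (H (t i) - H (s i)) < e.

Lemma HAC1 {H a b} : HAC H a b -> forall e, 0 < e -> exists d, 0 < d /\
  forall s t, a <= s -> s <= t -> t <= b -> t - s < d -> H t - H s < e.
Proof.
move=> hac e e0; have [d [d0 Hd]] := hac e e0; exists d; split => // s t sa st tb tsd.
have := Hd 1%N (fun=> s) (fun=> t) (fun=> conj sa (conj st tb)).
rewrite !big_ord1; apply => //.
by move=> i j; rewrite (ord1 i) (ord1 j) eqxx.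
Qed.

Lemma len_measure (x y : R) : x <= y ->
  @lebesgue_measure R `]x, y]%classic = (y - x)%:E.
Proof.
move=> xy; rewrite lebesgue_measure_itv /= lte_fin.
case: ltP => // yx; apply/eqP; rewrite eq_le in yx *; apply/andP; split.
- by rewrite lee_fin; lra.
- by rewrite lee_fin; lra.
Qed.

Lemma sum_len_le (U : set R) (m : nat) (s t : 'I_m -> R) :
  measurable U ->
  (forall i, s i <= t i) ->
  (forall i, `]s i, t i]%classic `<=` U) ->
  (forall i j, i != j -> t i <= s j \/ t j <= s i) ->
  ((\sum_(i < m) (t i - s i))%:E <= @lebesgue_measure R U)%E.
Proof.
move=> mU st sU dis.
rewrite -sumEFin (eq_bigr (fun i => lebesgue_measure `]s i, t i]%classic)); last first.
  by move=> i _; rewrite len_measure.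
rewrite -(measure_bigsetU_ord lebesgue_measure xpredT); last 2 first.
- by move=> i; exact: measurable_itv.
- move=> i j _ _ [x [/= + +]]; rewrite !in_itv /= => /andP[h1 h2] /andP[h3 h4].
  case: (eqVneq i j) => // /dis [h|h].
    by move: (lt_le_trans (le_lt_trans h h3) h2); rewrite ltxx.
  by move: (lt_le_trans (le_lt_trans h h1) h4); rewrite ltxx.
apply: le_measure; rewrite ?inE //.
- by apply: bigsetU_measurable => i _; exact: measurable_itv.
- apply: (big_ind (fun X => X `<=` U)) => //.
  by move=> X Y XU YU z [/XU|/YU].
Qed.

Lemma mono_le H a b L (A : set R) :
  a <= b -> 0 <= L -> measurable A -> @lebesgue_measure R A = 0%E -> HAC H a b ->
  (forall t, a <= t -> t < b -> ~ A t -> forall e, 0 < e -> exists d, 0 < d /\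
      forall u, t < u -> u < t + d -> H u - H t <= (L + e) * (u - t)) ->
  H b - H a <= L * (b - a).
Proof.
move=> ab L0 mA A0 hac dini.
apply/ler_addgt0Pr => e e0.
have e30 : 0 < e / 3 by rewrite divr_gt0.
pose eps := e / 3 / (b - a + 1).
have ba1 : 0 < b - a + 1 by lra.
have eps0 : 0 < eps by rewrite divr_gt0.
have [d [d0 Hd]] := hac (e / 3) e30.
have hAf : (lebesgue_measure A < +oo)%E.
  by rewrite A0 ltry.
have [U [oU AU UAd]] := lebesgue_regularity_outer mA hAf d0.
have mU : measurable U := measurable_realfun.open_measurable oU.
have lenU : forall m (s t : 'I_m -> R), (forall i, s i <= t i) ->
    (forall i, `]s i, t i]%classic `<=` U) ->
    (forall i j, i != j -> t i <= s j \/ t j <= s i) ->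
    \sum_(i < m) (t i - s i) < d.
  move=> m s t st sU dis; rewrite -lte_fin.
  apply: (le_lt_trans (sum_len_le mU st sU dis)).
  apply: le_lt_trans UAd.
  have mUA : measurable (U `\` A) by exact: measurableD.
  have h1 : (lebesgue_measure U <= lebesgue_measure ((U `\` A) `|` A))%E.
    apply: le_measure; rewrite ?inE //; first exact: measurableU.
    by move=> x Ux; case: (pselect (A x)) => Ax; [right|left].
  have h2 := measureU2 lebesgue_measure mUA mA.
  have h3 : (@lebesgue_measure R (U `\` A) + @lebesgue_measure R A =
     @lebesgue_measure R (U `\` A))%E by rewrite A0 adde0.
  apply: le_trans h1 _; apply: le_trans h2 _; rewrite h3 //.
pose Inv th s := exists m (ss tt : nat -> R),
  [/\ (forall i, (i < m)%N ->
        [/\ a <= ss i, ss i <= tt i, tt i <= s & `]ss i, tt i]%classic `<=` U]),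
      (forall i j, (i < m)%N -> (j < m)%N -> i != j -> tt i <= ss j \/ tt j <= ss i) &
      H s - H a <= (L + eps) * (s - a) + \sum_(i < m) (H (tt i) - H (ss i)) + th].
pose S := [set s | a <= s <= b /\ forall th, 0 < th -> Inv th s].
have Sa : S a.
  split; first by rewrite lexx ab.
  move=> th th0; exists 0%N, (fun=> 0), (fun=> 0); split => //.
  by rewrite big_ord0 !subrr mulr0 !add0r ltW.
have ubS : has_ubound S by exists b => x [/andP[]].
have supS : has_sup S by split => //; exists a.
have [s0 [hs1 hs2]] : exists s0, (forall x, S x -> x <= s0) /\
   (forall e, 0 < e -> exists2 s, S s & s0 - e < s).
  exists (sup S); split; first by move=> x Sx; apply: (ub_le_sup ubS).
  by move=> e' e'0; exact: sup_adherent.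
have as0 : a <= s0 := hs1 _ Sa.
have s0b : s0 <= b.
  rewrite leNgt; apply/negP => bs0.
  have [s [/andP[_ sb] _] ss0] := hs2 (s0 - b) ltac:(rewrite subr_gt0 //).
  by move: ss0; rewrite opprB addrCA subrr addr0 ltNge sb.
have Invs0 : forall th, 0 < th -> Inv th s0.
  move=> th th0.
  have th20 : 0 < th / 2 by rewrite divr_gt0.
  have [d1 [d10 Hd1]] := HAC1 hac th20.
  have [s [/andP[sa sb] Ss] ss0] := hs2 _ d10.
  have ss0' : s <= s0 := hs1 _ (conj (introT andP (conj sa sb)) Ss).
  have [m [ss [tt [P1 P2 P3]]]] := Ss _ th20.
  exists m, ss, tt; split => //.
    move=> i im; have [h1 h2 h3 h4] := P1 i im; split => //; exact: le_trans ss0'.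
  have h := Hd1 s s0 sa ss0' s0b ltac:(lra).
  have : (L + eps) * (s - a) <= (L + eps) * (s0 - a).
    by apply: ler_wpM2l; lra.
  lra.
have s0S : S s0 by split => //; rewrite as0 s0b.
have s0eb : s0 = b.
  apply/eqP; rewrite eq_le s0b /=; rewrite leNgt; apply/negP => s0b'.
  suff [u [s0u Su]] : exists u, s0 < u /\ S u.
    by move: (hs1 _ Su); rewrite leNgt s0u.
  case: (pselect (A s0)) => As0.
  - move: oU; rewrite openE => /(_ _ (AU _ As0)) /nbhs_ballP [r /= r0 rU].
    have r20 : 0 < r / 2 by rewrite divr_gt0.
    have [u [hu1 hu2 hu3]] : exists u, [/\ s0 < u, u <= b & u <= s0 + r / 2].
      exists (Num.min b (s0 + r / 2)); split.
      - by rewrite lt_min s0b' /= ltrDl.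
      - by rewrite ge_min lexx.
      - by rewrite ge_min lexx orbT.
    exists u.
    split => //; split; first by apply/andP; split => //; lra.
    move=> th th0; have [m [ss [tt [P1 P2 P3]]]] := Invs0 _ th0.
    exists m.+1, (fun i => if i == m then s0 else ss i), (fun i => if i == m then u else tt i).
    split.
    + move=> i; rewrite ltnS leq_eqVlt => /orP[/eqP ->|im].
        rewrite eqxx; split => //; first exact: ltW.
        move=> x /=; rewrite in_itv /= => /andP[x1 x2]; apply: rU.
        by rewrite -ball_normE /ball_ /= distrC ger0_norm; lra.
      rewrite (ltn_eqF im); have [h1 h2 h3 h4] := P1 i im; split => //; lra.
    + move=> i j; rewrite ltnS leq_eqVlt => /orP[/eqP ->|im];
        rewrite ltnS leq_eqVlt => /orP[/eqP ->|jm] ij.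
      * by rewrite eqxx in ij.
      * by rewrite eqxx (ltn_eqF jm); right; have [] := P1 j jm.
      * by rewrite eqxx (ltn_eqF im); left; have [] := P1 i im.
      * by rewrite (ltn_eqF im) (ltn_eqF jm); exact: P2.
    + rewrite big_ord_recr /= eqxx.
      rewrite (eq_bigr (fun i : 'I_m => H (tt i) - H (ss i))); last first.
        by move=> i _; rewrite /= (ltn_eqF (ltn_ord i)).
      have : (L + eps) * (u - s0) >= 0 by apply: mulr_ge0; lra.
      have : (L + eps) * (u - a) = (L + eps) * (s0 - a) + (L + eps) * (u - s0) by ring.
      lra.
  - have [dd [dd0 Hdd]] := dini s0 as0 s0b' As0 eps eps0.
    have r20 : 0 < dd / 2 by rewrite divr_gt0.
    have [u [hu1 hu2 hu3]] : exists u, [/\ s0 < u, u <= b & u <= s0 + dd / 2].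
      exists (Num.min b (s0 + dd / 2)); split.
      - by rewrite lt_min s0b' /= ltrDl.
      - by rewrite ge_min lexx.
      - by rewrite ge_min lexx orbT.
    exists u.
    split => //; split; first by apply/andP; split => //; lra.
    move=> th th0; have [m [ss [tt [P1 P2 P3]]]] := Invs0 _ th0.
    exists m, ss, tt; split => //.
      move=> i im; have [h1 h2 h3 h4] := P1 i im; split => //; lra.
    have := Hdd u hu1 ltac:(lra).
    have : (L + eps) * (u - a) = (L + eps) * (s0 - a) + (L + eps) * (u - s0) by ring.
    lra.
have [m [ss [tt [P1 P2 P3]]]] := Invs0 _ e30.
rewrite s0eb in P1 P3.
have sumlt : \sum_(i < m) (H (tt i) - H (ss i)) < e / 3.
  apply: (Hd m (fun i => ss i) (fun i => tt i)).
  - by move=> i; have [h1 h2 h3 h4] := P1 i (ltn_ord i).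
  - by move=> i j ij; apply: P2.
  - apply: lenU.
    + by move=> i; have [h1 h2 h3 h4] := P1 i (ltn_ord i).
    + by move=> i; have [h1 h2 h3 h4] := P1 i (ltn_ord i).
    + by move=> i j ij; apply: P2.
have : eps * (b - a) <= e / 3.
  rewrite /eps mulrAC ler_pdivrMr // ler_pM2l //; lra.
have : (L + eps) * (b - a) = L * (b - a) + eps * (b - a) by ring.
lra.
Qed.

End Mono.

Section Dist.
Variables (R : realType) (n : nat).
Local Notation V := 'rV[R]_n.
Local Notation q x := (dotv x x).
Implicit Types (K : set V) (z y w : V).

Definition dist2 (K : set V) (z : V) : R := inf [set q (z - w) | w in K].

Lemma dist2_lb K z : has_lbound [set q (z - w) | w in K].
Proof. by exists 0 => x [w _ <-]; exact: dotv_ge0. Qed.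

Lemma dist2_ge0 K z : K !=set0 -> 0 <= dist2 K z.
Proof.
move=> [w Kw]; apply: lb_le_inf; first by exists (q (z - w)), w.
by move=> x [w' _ <-]; exact: dotv_ge0.
Qed.

Lemma dist2_le K z w : K w -> dist2 K z <= q (z - w).
Proof. by move=> Kw; apply: ge_inf; [exact: dist2_lb | exists w]. Qed.

Lemma dist2_approx K z e : K !=set0 -> 0 < e ->
  exists w, K w /\ q (z - w) < dist2 K z + e.
Proof.
move=> [w0 Kw0] e0.
have [x [w Kw <-] h] := @inf_adherent R _ e e0 (conj (ex_intro _ _ (ex_intro2 _ _ w0 Kw0 erefl)) (dist2_lb K z)).
by exists w.
Qed.

Lemma dist2_eq K z y : K y -> (forall w, K w -> q (z - y) <= q (z - w)) ->
  dist2 K z = q (z - y).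
Proof.
move=> Ky H; apply/eqP; rewrite eq_le dist2_le //=.
apply: lb_le_inf; first by exists (q (z - y)), y.
by move=> x [w Kw <-]; exact: H.
Qed.

Lemma closure_small (K : set V) z : closed K ->
  (forall e, 0 < e -> exists w, K w /\ q (z - w) <= e) -> K z.
Proof.
move=> clK H; apply: clK => B /nbhs_ballP [r /= r0 rB].
have r20 : 0 < r / 2 by rewrite divr_gt0.
have [w [Kw hw]] := H _ (mulr_gt0 r20 r20).
exists w; split => //; apply: rB.
rewrite -ball_normE /ball_ /=.
apply: le_lt_trans (_ : r / 2 < r); last by lra.
by apply: norm_le_sq; [exact: ltW | rewrite expr2].
Qed.

Lemma dist2_0 K z : closed K -> K !=set0 -> dist2 K z <= 0 -> K z.
Proof.
move=> clK Kne d0; apply: closure_small => // e e0.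
have [w [Kw hw]] := dist2_approx z Kne e0.
by exists w; split => //; apply: ltW; apply: lt_le_trans hw _; lra.
Qed.

Lemma dist2_upper K z z' : K !=set0 -> dist2 K z <= 1 -> `|z' - z| <= 2 ->
  dist2 K z' - dist2 K z <= 6 * n%:R * `|z' - z|.
Proof.
move=> Kne d1 hD; apply/ler_addgt0Pr => e e0.
have e'0 : 0 < Num.min e 1 by rewrite lt_min e0 ltr01.
have [w [Kw hw]] := dist2_approx z Kne e'0.
have e'1 : Num.min e 1 <= 1 by rewrite ge_min lexx orbT.
have e'e : Num.min e 1 <= e by rewrite ge_min lexx.
set a := z - w; set D := z' - z.
have ha : `|a| <= 2 by apply: norm_le_sq => //; lra.
have h1 := dist2_le z' Kw.
have h4 : z' - w = a + D by rewrite /a /D [RHS]addrC addrA subrK.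
rewrite h4 dotv_sq in h1.
have h2 : dotv a D <= n%:R * (2 * `|D|).
  apply: le_trans (ler_norm _) _; apply: le_trans (dotv_le _ _) _.
  by apply: ler_wpM2l => //; apply: ler_wpM2r.
have h3 : dotv D D <= n%:R * (2 * `|D|).
  apply: le_trans (dotv_sq_le _) _; rewrite expr2.
  by apply: ler_wpM2l => //; apply: ler_wpM2r.
nra.
Qed.
Lemma dotvZl (l : R) (a b : V) : dotv (l *: a) b = l * dotv a b.
Proof. by rewrite dotvC dotvZr dotvC. Qed.

Lemma qZ (l : R) (a : V) : q (l *: a) = l ^+ 2 * q a.
Proof. by rewrite dotvZl dotvZr mulrA expr2. Qed.

Lemma qN (a : V) : q (- a) = q a.
Proof. by rewrite dotvNl dotvNr opprK. Qed.

Lemma seg K z y : closed K -> ~ K z ->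
  (forall p, boundary K p -> q (z - y) <= q (z - p)) ->
  forall w, K w -> q (z - y) <= q (z - w).
Proof.
move=> clK nKz Hy w Kw.
pose S := [set s : R | 0 <= s <= 1 /\ K (z + s *: (w - z))].
have S1 : S 1 by split; [rewrite ler01 lexx | rewrite scale1r addrC subrK].
have lbS : has_lbound S by exists 0 => x [/andP[]].
have [s1 [hi1 hi2 s10 s11]] : exists s1, [/\ forall s, S s -> s1 <= s,
    forall e, 0 < e -> exists2 s, S s & s < s1 + e, 0 <= s1 & s1 <= 1].
  exists (inf S); split.
  - by move=> s Ss; apply: ge_inf.
  - by move=> e e0; have [s Ss h] := inf_adherent e0 (conj (ex_intro _ _ S1) lbS); exists s.
  - by apply: lb_le_inf; [exists 1 | move=> x [/andP[]]].
  - by apply: ge_inf.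
pose p := z + s1 *: (w - z).
have pE : forall s, p - (z + s *: (w - z)) = (s1 - s) *: (w - z).
  by move=> s; rewrite /p scalerBl opprD addrACA subrr add0r.
have Kp : K p.
  apply: closure_small => // e e0.
  set Q := q (w - z).
  have Q0 : 0 <= Q by exact: dotv_ge0.
  have [e' [e'0 e'1 e'2]] : exists e', [/\ 0 < e', e' <= 1 & e' <= e / (Q + 1)].
    exists (Num.min 1 (e / (Q + 1))); split.
    - by rewrite lt_min ltr01 divr_gt0 //; lra.
    - by rewrite ge_min lexx.
    - by rewrite ge_min lexx orbT.
  have [s [/andP[s0 s1'] Ks] hs] := hi2 _ e'0.
  exists (z + s *: (w - z)); split => //.
  have ss1 := hi1 s (conj (introT andP (conj s0 s1')) Ks).
  rewrite pE qZ.
  have h1 : (s1 - s) ^+ 2 <= e'.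
    rewrite expr2; have : 0 <= s - s1 by lra.
    nra.
  have h2 : e' * (Q + 1) <= e by rewrite -ler_pdivlMr //; lra.
  have h3 : (s1 - s) ^+ 2 * Q <= e' * Q by apply: ler_wpM2r.
  by rewrite -/Q; clearbody Q; lra.
have nIp : ~ interior K p.
  move=> /nbhs_ballP [r /= r0 rK].
  have s1pos : 0 < s1.
    rewrite lt_def s10 andbT; apply/eqP => s1z.
    by apply: nKz; move: Kp; rewrite /p s1z scale0r addr0.
  set W := `|w - z|.
  have W0 : 0 <= W by exact: normr_ge0.
  have [m [m0 m1 m2]] : exists m, [/\ 0 < m, m <= s1 & m <= r / (W + 1)].
    exists (Num.min s1 (r / (W + 1))); split.
    - by rewrite lt_min s1pos divr_gt0 //; lra.
    - by rewrite ge_min lexx.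
    - by rewrite ge_min lexx orbT.
  have hm : m * (W + 1) <= r by rewrite -ler_pdivlMr //; lra.
  have Ks' : K (z + (s1 - m / 2) *: (w - z)).
    apply: rK; rewrite -ball_normE /ball_ /= pE normrZ.
    rewrite ger0_norm; last by lra.
    have : (s1 - (s1 - m / 2)) = m / 2 by ring.
    move=> ->; rewrite -/W; clearbody W; nra.
  have := hi1 (s1 - m / 2) (conj (introT andP (conj _ _)) Ks').
  by move=> /(_ ltac:(lra) ltac:(lra)); lra.
have bp : boundary K p by split => //; exact: subset_closure.
apply: le_trans (Hy _ bp) _.
have -> : z - p = s1 *: (z - w).
  by rewrite /p opprD addrA subrr add0r -scalerN opprB.
rewrite qZ.
have : 0 <= q (z - w) by exact: dotv_ge0.
have : s1 ^+ 2 <= 1 by rewrite expr2; nra.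
nra.
Qed.
Lemma cont_normal K z y v : K y -> (forall w, K w -> q (z - y) <= q (z - w)) ->
  contingent K y v -> dotv (z - y) v <= 0.
Proof.
move=> Ky Hn [t [w [t0 [tc [wc Kt]]]]].
set P := z - y.
have key : forall i, 2 * dotv P (w i) <= t i * q (w i).
  move=> i; have := Hn _ (Kt i).
  have -> : z - (y + t i *: w i) = P + (- (t i *: w i)).
    by rewrite /P opprD addrA.
  rewrite [X in _ <= X]dotv_sq qN qZ dotvNr dotvZr => h.
  have ti := t0 i.
  have : t i * (2 * dotv P (w i)) <= t i * (t i * q (w i)).
    rewrite expr2 in h; nra.
  by rewrite ler_pM2l.
rewrite leNgt; apply/negP => p0.
set p := dotv P v in p0.
set NP := `|P|.
have NP0 : 0 <= NP by exact: normr_ge0.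
set Nv := `|v|.
have Nv0 : 0 <= Nv by exact: normr_ge0.
have [e1 [e10 e11 e12]] : exists e1, [/\ 0 < e1, e1 <= 1 & e1 * (n%:R * NP + 1) <= p / 2].
  exists (Num.min 1 (p / 2 / (n%:R * NP + 1))); split.
  - by rewrite lt_min ltr01 !divr_gt0 //; have := ler0n R n; nra.
  - by rewrite ge_min lexx.
  - rewrite -ler_pdivlMr; last by have := ler0n R n; nra.
    by rewrite ge_min lexx orbT.
have n0 := ler0n R n.
have Q0 : 0 < n%:R * (Nv + 1) ^+ 2 + 1 by nra.
have e20 : 0 < p / 2 / (n%:R * (Nv + 1) ^+ 2 + 1) by rewrite !divr_gt0.
have h1 : \forall j \near \oo, `|v - w j| < e1 by move/cvgrPdist_lt : wc; apply.
have h2 : \forall j \near \oo, `|0 - t j| < p / 2 / (n%:R * (Nv + 1) ^+ 2 + 1).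
  by move/cvgrPdist_lt : tc; apply.
have [i [/= hw ht]] := filter_ex (filterI h1 h2).
have hwv : `|w i - v| < e1 by rewrite distrC.
have hti : t i < p / 2 / (n%:R * (Nv + 1) ^+ 2 + 1).
  by move: ht; rewrite sub0r normrN ger0_norm //; exact: ltW.
have d1 : dotv P (w i) >= p / 2.
  have -> : w i = v + (w i - v) by rewrite addrC subrK.
  rewrite dotvDr -/p.
  have := dotv_le P (w i - v); rewrite -/NP => h.
  have : n%:R * (NP * `|w i - v|) <= n%:R * (NP * e1).
    by apply: ler_wpM2l => //; apply: ler_wpM2l => //; exact: ltW.
  have := ler_norm (- dotv P (w i - v)); rewrite normrN.
  nra.
have nw : `|w i| <= Nv + 1.
  have -> : w i = v + (w i - v) by rewrite addrC subrK.
  apply: le_trans (ler_normD _ _) _; rewrite -/Nv; lra.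
have qw : q (w i) <= n%:R * (Nv + 1) ^+ 2.
  apply: le_trans (dotv_sq_le _) _; apply: ler_wpM2l => //.
  by rewrite !expr2; apply: ler_pM => //; exact: normr_ge0.
have tq : t i * q (w i) < p / 2.
  have q0 : 0 <= q (w i) by exact: dotv_ge0.
  have ti := t0 i.
  have : t i * q (w i) <= t i * (n%:R * (Nv + 1) ^+ 2) by apply: ler_wpM2l => //; exact: ltW.
  have : t i * (n%:R * (Nv + 1) ^+ 2 + 1) < p / 2 by rewrite -ltr_pdivlMr.
  nra.
have := key i; lra.
Qed.
Lemma dini_bound K (phi : R -> V) s v y c :
  (fun h => h^-1 *: (phi (h + s) - phi s)) @ 0^' --> v ->
  K y -> dist2 K (phi s) = q (phi s - y) -> dotv (phi s - y) v <= c ->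
  `|phi s - y| <= 1 ->
  forall e, 0 < e -> exists d, 0 < d /\ forall u, s < u -> u < s + d ->
    dist2 K (phi u) - dist2 K (phi s) <= (2 * c + e) * (u - s).
Proof.
move=> cv Ky dE dc P1 e e0.
have n0 := ler0n R n.
have [e1 [e10 e1e]] : exists e1, 0 < e1 /\ 2 * n%:R * e1 <= e / 2.
  exists (e / (4 * (n%:R + 1))); split; first by rewrite divr_gt0 //; lra.
  rewrite mulrA ler_pdivrMr; last by lra.
  have : 0 <= e * n%:R by nra.
  nra.
have h1 : \forall h \near 0^', `|v - h^-1 *: (phi (h + s) - phi s)| < e1.
  by move/cvgrPdist_lt : cv; apply.
move: h1 => /nbhs_ballP [r /= r0 hr].
have [W [W0 WE]] : exists W, 0 <= W /\ W = `|v| + e1.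
  by exists (`|v| + e1); split => //; have := normr_ge0 v; lra.
have Q0 : 0 < 2 * (n%:R * W ^+ 2 + 1) by nra.
have [d [d0 dr de]] : exists d, [/\ 0 < d, d <= r & d <= e / (2 * (n%:R * W ^+ 2 + 1))].
  exists (Num.min r (e / (2 * (n%:R * W ^+ 2 + 1)))); split.
  - by rewrite lt_min r0 divr_gt0.
  - by rewrite ge_min lexx.
  - by rewrite ge_min lexx orbT.
exists d; split => // u su usd.
have [h [h0 hr' he uE]] : exists h, [/\ 0 < h, h < r,
    h * (2 * (n%:R * W ^+ 2 + 1)) <= e & u = h + s].
  exists (u - s); split; [lra | lra | | by rewrite subrK].
  rewrite -ler_pdivlMr //; lra.
rewrite uE (_ : h + s - s = h); last by rewrite addrK.
have [D DE] : exists D, D = phi (h + s) - phi s by exists (phi (h + s) - phi s).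
have hD : `|D - h *: v| <= h * e1.
  have hh : h != 0 by rewrite gt_eqF.
  have := hr h; rewrite -ball_normE /ball_ /= sub0r normrN ger0_norm; last exact: ltW.
  move=> /(_ hr' hh); rewrite -DE => hlt.
  have -> : D - h *: v = h *: (h^-1 *: D - v).
    by rewrite scalerBr scalerA divff // scale1r.
  rewrite normrZ ger0_norm; last exact: ltW.
  by apply: ler_wpM2l; [exact: ltW | rewrite distrC; exact: ltW].
have hDn : `|D| <= h * W.
  have -> : D = h *: v + (D - h *: v) by rewrite addrC subrK.
  apply: le_trans (ler_normD _ _) _; rewrite normrZ ger0_norm; last exact: ltW.
  rewrite WE; nra.
set P := phi s - y in dE dc P1 *.
have hu : phi (h + s) - y = P + D by rewrite DE /P [RHS]addrC addrA subrK.
have h2 := dist2_le (phi (h + s)) Ky.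
rewrite hu dotv_sq -dE in h2.
have h3 : dotv P D <= h * c + n%:R * (h * e1).
  have -> : D = h *: v + (D - h *: v) by rewrite addrC subrK.
  rewrite dotvDr dotvZr.
  have : h * dotv P v <= h * c by apply: ler_wpM2l => //; exact: ltW.
  have : dotv P (D - h *: v) <= n%:R * (h * e1).
    apply: le_trans (ler_norm _) _; apply: le_trans (dotv_le _ _) _.
    apply: ler_wpM2l => //; rewrite -[X in _ <= X]mul1r.
    by apply: ler_pM => //; exact: normr_ge0.
  lra.
have h4 : q D <= n%:R * (h * W) ^+ 2.
  apply: le_trans (dotv_sq_le _) _; apply: ler_wpM2l => //.
  by rewrite !expr2; apply: ler_pM => //; exact: normr_ge0.
have h5 : n%:R * (h * W) ^+ 2 <= h * (e / 2).
  have : h * (n%:R * W ^+ 2) <= e / 2 by nra.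
  have : n%:R * (h * W) ^+ 2 = h * (h * (n%:R * W ^+ 2)) by rewrite !expr2; ring.
  move=> ->; move=> hh; apply: ler_wpM2l => //; exact: ltW.
have h6 : 2 * (n%:R * (h * e1)) <= h * (e / 2).
  have : h * (2 * n%:R * e1) <= h * (e / 2) by apply: ler_wpM2l => //; exact: ltW.
  have : 2 * (n%:R * (h * e1)) = h * (2 * n%:R * e1) by ring.
  lra.
have : (2 * c + e) * h = 2 * (h * c) + h * e by ring.
have : h * (e / 2) + h * (e / 2) = h * e by rewrite -mulrDr; congr (_ * _); lra.
lra.
Qed.

End Dist.

Section Local.
Variables (R : realType) (n : nat).
Local Notation V := 'rV[R]_n.
Local Notation q x := (dotv x x).

Lemma deriv_cvg (phi : R -> V) s : derivable phi s 1 ->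
  (fun h => h^-1 *: (phi (h + s) - phi s)) @ 0^' --> 'D_1 phi s.
Proof.
move=> d.
have E : (fun h : R => h^-1 *: ((phi \o shift s) h%:A - phi s)) =
         (fun h => h^-1 *: (phi (h + s) - phi s)).
  by apply: funext => h; rewrite /= /shift [h%:A]mulr1.
rewrite /derive -E; exact: d.
Qed.

Lemma enorm_le_sq (x y : V) : enorm x <= enorm y -> q x <= q y.
Proof.
move=> h; rewrite -!enorm_sq !expr2; apply: ler_pM => //; exact: enorm_ge0.
Qed.

Lemma ac_single (phi : R -> V) a b : abs_cont_on phi a b ->
  forall e, 0 < e -> exists d, 0 < d /\ forall s t, a <= s -> s <= t -> t <= b ->
    t - s < d -> enorm (phi t - phi s) < e.
Proof.
move=> ac e e0; have [d [d0 Hd]] := ac e e0; exists d; split => // s t sa st tb tsd.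
have := Hd 1%N (fun=> s) (fun=> t) (fun=> conj sa (conj st tb)).
rewrite !big_ord1; apply => //.
by move=> i j; rewrite (ord1 i) (ord1 j) eqxx.
Qed.

Lemma local_step (C K : set V) (F : V -> set V) (phi : R -> V) (D : set R)
    (T : R) (A : set R) (a : R) :
  closed K -> closed C -> (forall x, C x -> F x !=set0) ->
  one_sided_loc_lipschitz F ->
  (forall y, boundary K y -> interior C y -> F y `<=` contingent K y) ->
  (forall t, D t -> C (phi t)) ->
  loc_abs_cont_on phi D ->
  measurable A -> @lebesgue_measure R A = 0%E ->
  (forall t, ~ A t -> D t -> derivable phi t 1 /\ F (phi t) ('D_1 phi t)) ->
  (forall t, 0 <= t <= T -> D t) ->
  (forall t, 0 < t <= T -> Proj (boundary K) (phi t) `&` interior C !=set0) ->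
  0 <= a -> a < T -> K (phi a) ->
  exists tau, [/\ 0 < tau, a + tau <= T & forall t, a <= t <= a + tau -> K (phi t)].
Proof.
move=> clK clC FC osl tang inC acD mA A0 HA D0T star a0 aT Ka.
have Kne : K !=set0 by exists (phi a).
have n0 := ler0n R n.
have Ca : C (phi a) by apply: inC; apply: D0T; rewrite a0 ltW.
pose N := C `&` closed_ball (phi a) 3.
have cbE : closed_ball (phi a) 3 = [set x | `|phi a - x| <= 3].
  by rewrite closed_ballE.
have [k [k0 Hk]] : exists k : R, 0 < k /\
    forall x1 x2, N x1 -> N x2 ->
        forall v1, F x1 v1 ->
          exists v2, F x2 v2 /\ exists b : R, -1 <= b <= 1 /\
            dotv (x1 - x2) v1 = dotv (x1 - x2) v2 + k * enorm (x1 - x2) ^+ 2 * b.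
  apply: osl.
  - by exists (phi a); split => //; rewrite cbE /= subrr normr0.
  - apply: bounded_closed_compact.
      rewrite /bounded_near.
      apply: filterS (nbhs_pinfty_ge (r := `|phi a| + 3) _) => //.
      move=> M hM x [_]; rewrite cbE /= => hx.
      have : `|x| <= `|phi a| + `|phi a - x|.
        by have := ler_normB (phi a) (phi a - x); rewrite opprB addrC subrK.
      lra.
    apply: closedI => //; exact: closed_ball_closed.
  - by move=> x [Cx _]; rewrite /domF /=; exact: FC.
have D0 : forall t, 0 <= t <= T -> D t := D0T.
have acT : abs_cont_on phi 0 T.
  by apply: acD; [lra | move=> t /= ht; apply: D0T].
have [d1 [d10 Hd1]] := ac_single acT ltr01.
have [tau [tau0 taT tad tak]] : exists tau, [/\ 0 < tau, a + tau <= T, tau < d1 & 4 * k * tau <= 1].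
  have h4k : 0 < (4 * k)^-1 by rewrite invr_gt0; lra.
  exists (Num.min (T - a) (Num.min (d1 / 2) (4 * k)^-1)); split.
  - by rewrite !lt_min subr_gt0 aT divr_gt0.
  - have : Num.min (T - a) (Num.min (d1 / 2) (4 * k)^-1) <= T - a by rewrite ge_min lexx.
    lra.
  - have : Num.min (T - a) (Num.min (d1 / 2) (4 * k)^-1) <= d1 / 2.
      by rewrite !ge_min lexx orbT.
    lra.
  - have : Num.min (T - a) (Num.min (d1 / 2) (4 * k)^-1) <= (4 * k)^-1.
      by rewrite !ge_min lexx !orbT.
    have h4 : 0 < 4 * k by lra.
    move=> hm; have := ler_wpM2l (ltW h4) hm; rewrite mulfV //; exact: lt0r_neq0.
exists tau; split => //.
have [b bE] : exists b, b = a + tau by eexists.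
pose G t := dist2 K (phi t).
have close : forall t, a <= t <= b -> enorm (phi t - phi a) < 1.
  move=> t /andP[ta tb].
  by apply: Hd1 => //; rewrite bE in tb; lra.
have closeN : forall t, a <= t <= b -> `|phi a - phi t| < 1.
  move=> t ht; rewrite -normrN opprB.
  exact: le_lt_trans (norm_le_enorm _) (close t ht).
have G1 : forall t, a <= t <= b -> G t < 1.
  move=> t ht; apply: le_lt_trans (dist2_le _ Ka) _.
  rewrite -enorm_sq expr2; have := close t ht; have := enorm_ge0 (phi t - phi a).
  nra.
have G0 : forall t, 0 <= G t by move=> t; exact: dist2_ge0.
have Gacc : HAC G a b.
  move=> eta eta0.
  have ab : a <= b by rewrite bE; lra.
  have acab : abs_cont_on phi a b.
    apply: acD => // t /= /andP[ta tb]; apply: D0T; rewrite bE in tb; lra.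
  have e'0 : 0 < eta / (6 * n%:R + 1) by rewrite divr_gt0 //; lra.
  have [d [d0 Hd]] := acab _ e'0.
  exists d; split => // m s t hst dis sl.
  have hsum := Hd m s t hst dis sl.
  have hle : \sum_(i < m) (G (t i) - G (s i)) <=
      \sum_(i < m) 6 * n%:R * enorm (phi (t i) - phi (s i)).
    apply: ler_sum => i _.
    have [hs1 [hs2 hs3]] := hst i.
    have hs : a <= s i <= b by rewrite hs1 /=; lra.
    have ht : a <= t i <= b by apply/andP; split; lra.
    apply: le_trans (_ : 6 * n%:R * `|phi (t i) - phi (s i)| <= _); last first.
      by apply: ler_wpM2l; [lra | exact: norm_le_enorm].
    apply: dist2_upper => //; first exact: ltW (G1 _ hs).
    have -> : phi (t i) - phi (s i) = (phi a - phi (s i)) - (phi a - phi (t i)).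
      by rewrite [RHS]addrC opprB addrA subrK.
    apply: le_trans (ler_normB _ _) _.
    have := closeN _ hs; have := closeN _ ht; lra.
  apply: le_lt_trans hle _.
  rewrite -mulr_sumr.
  have : 6 * n%:R * \sum_(i < m) enorm (phi (t i) - phi (s i)) <=
         6 * n%:R * (eta / (6 * n%:R + 1)) by apply: ler_wpM2l; [lra | exact: ltW].
  have : 6 * n%:R * (eta / (6 * n%:R + 1)) < eta.
    rewrite mulrA ltr_pdivrMr; last lra.
    nra.
  lra.
have Ga0 : G a = 0.
  apply/eqP; rewrite eq_le G0 andbT.
  by apply: le_trans (dist2_le _ Ka) _; rewrite subrr dotv0r.
have ab : a <= b by rewrite bE; lra.
pose SG := [set G t | t in [set t | a <= t <= b]].
have SGne : SG !=set0 by exists (G a), a; rewrite //= lexx ab.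
have ubSG : has_ubound SG by exists 1 => x [t ht <-]; exact: ltW (G1 _ ht).
have [M [M1 M2 M0 Mle1]] : exists M, [/\ forall t, a <= t <= b -> G t <= M,
    forall x, (forall t, a <= t <= b -> G t <= x) -> M <= x, 0 <= M & M <= 1].
  exists (sup SG); split.
  - by move=> t ht; apply: ub_le_sup => //; exists t.
  - by move=> x hx; apply: ge_sup => // y [t ht <-]; exact: hx.
  - by rewrite -Ga0; apply: ub_le_sup => //; exists a; rewrite //= lexx ab.
  - by apply: ge_sup => // y [t ht <-]; exact: ltW (G1 _ ht).
have key : forall t, a <= t <= b -> G t <= M / 2.
  move=> t /andP[ta tb].
  have hacG : HAC G a t.
    move=> eta eta0; have [d [d0 Hd]] := Gacc eta eta0; exists d; split => //.
    move=> m s u hsu dis sl; apply: Hd => // i.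
    by have [h1 [h2 h3]] := hsu i; split => //; split => //; lra.
  have L0 : 0 <= 2 * k * M by apply: mulr_ge0 => //; lra.
  have dini : forall s, a <= s -> s < t -> ~ A s -> forall e, 0 < e ->
      exists d, 0 < d /\ forall u, s < u -> u < s + d ->
        G u - G s <= (2 * k * M + e) * (u - s).
    move=> s sa st nAs e e0.
    have sb : a <= s <= b by apply/andP; split; lra.
    have Ds : D s by apply: D0T; apply/andP; split; lra.
    have [der Fv] := HA s nAs Ds.
    have cv := deriv_cvg der.
    suff [y [Ky dE dc P1]] : exists y, [/\ K y, G s = q (phi s - y),
        dotv (phi s - y) ('D_1 phi s) <= k * M & `|phi s - y| <= 1].
      have [d [d0 Hd]] := dini_bound cv Ky dE dc P1 e0.
      by exists d; split => // u su usd; rewrite -mulrA; exact: Hd.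
    case: (pselect (K (phi s))) => Ks.
    - exists (phi s); split => //.
      + rewrite subrr dotv0r; apply/eqP; rewrite eq_le G0 andbT.
        by apply: le_trans (dist2_le _ Ks) _; rewrite subrr dotv0r.
      + by rewrite subrr dotvC dotv0r; apply: mulr_ge0 => //; exact: ltW.
      + by rewrite subrr normr0 ler01.
    - have s0 : 0 < s.
        case: (eqVneq s a) => [sa'|sna]; first by rewrite sa' in Ks.
        have : a < s by rewrite lt_neqAle eq_sym sna sa.
        lra.
      have [y [[[cly nIy] Py] Cy]] := star s ltac:(apply/andP; split; lra).
      have Ky : K y by exact: clK.
      have near : forall w, K w -> q (phi s - y) <= q (phi s - w).
        apply: (seg clK Ks) => p bp; apply: enorm_le_sq; exact: Py.
      have dE := dist2_eq Ky near.
      have Gs := M1 s sb.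
      have P1 : `|phi s - y| <= 1.
        by apply: norm_le_sq => //; rewrite expr1n -dE; lra.
      exists y; split => //.
      have Nz : N (phi s).
        split; first by apply: inC.
        rewrite cbE /=; have := closeN s sb; lra.
      have Ny : N y.
        split; first exact: interior_subset.
        rewrite cbE /=.
        have -> : phi a - y = (phi a - phi s) + (phi s - y) by rewrite addrA subrK.
        apply: le_trans (ler_normD _ _) _; have := closeN s sb; lra.
      have [v2 [Fv2 [bb [hb heq]]]] := Hk _ _ Nz Ny _ Fv.
      have cont := tang y (conj cly nIy) Cy v2 Fv2.
      have := cont_normal Ky near cont.
      rewrite heq enorm_sq -dE => hv.
      have q0 := G0 s.
      move: hb => /andP[hb1 hb2].
      have hGb : G s * bb <= G s by rewrite -[X in _ <= X]mulr1; apply: ler_wpM2l.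
      have : k * (G s * bb) <= k * M.
        apply: ler_wpM2l; [exact: ltW | lra].
      rewrite mulrA; lra.
  have hm := mono_le ta L0 mA A0 hacG dini.
  rewrite Ga0 subr0 in hm.
  have : 2 * k * M * (t - a) <= 2 * k * M * tau.
    by apply: ler_wpM2l => //; rewrite bE in tb; lra.
  have : 2 * k * M * tau <= M / 2 by nra.
  lra.
have MM : M <= M / 2 by apply: M2.
move=> t ht; rewrite -bE in ht.
apply: (dist2_0 clK Kne); have := M1 t ht; lra.
Qed.

End Local.

Unset Implicit Arguments. Set Strict Implicit.

Theorem proposition2 (R : realType) (n : nat) (C K : set 'rV[R]_n)
    (F : 'rV[R]_n -> set 'rV[R]_n) (phi : R -> 'rV[R]_n) (D : set R) (T : R) :
  closed K ->
  standing_assumption C F ->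
  (forall y, boundary K y -> interior C y -> F y `<=` contingent K y) ->
  is_solution C F phi D ->
  boundary K (phi 0) ->
  0 < T ->
  [set t | 0 < t <= T] `<=` D ->
  (forall t, 0 < t <= T -> Proj (boundary K) (phi t) `&` interior C !=set0) ->
  phi @` [set t | 0 <= t <= T] `<=` K /\ ~ leaves_immediately C K phi D.
Proof.
move=> clK [clC Fp _ osl] tang [dom acD inC aeF] bd0 T0 sub star.
have FC : forall x, C x -> F x !=set0 by move=> x Cx; have [] := Fp x Cx.
have [A [mA A0 HA]] : exists A, [/\ measurable A, @lebesgue_measure R A = 0%E &
    forall t, ~ A t -> D t -> derivable phi t 1 /\ F (phi t) ('D_1 phi t)].
  case: aeF => A [mA A0 HA]; exists A; split => // t nA Dt.
  apply: contrapT => nP; apply: nA; apply: HA => /=; tauto.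
have K0 : K (phi 0) by apply: clK; case: bd0.
have DT : D T by apply: sub; rewrite /= T0 lexx.
have D0T : forall t, 0 <= t <= T -> D t.
  move=> t /andP[t0 tT].
  case: dom => [[T' [T'0 DE]]|[T' [T'0 DE]]]; rewrite DE /= in DT *.
  - by move: DT => /andP[_ h]; rewrite t0 /=; lra.
  - split => //; case: DT => _; apply: le_lt_trans; by rewrite lee_fin.
have claim : forall t, 0 <= t <= T -> K (phi t).
  pose S := [set s | 0 <= s <= T /\ forall u, 0 <= u <= s -> K (phi u)].
  have S0 : S 0.
    split; first by rewrite lexx ltW.
    by move=> u /andP[u0 u0']; have -> : u = 0 by apply/eqP; rewrite eq_le u0 u0'.
  have ubS : has_ubound S by exists T => x [/andP[]].
  have supS : has_sup S by split => //; exists 0.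
  have [s0 [hs1 hs2]] : exists s0, (forall x, S x -> x <= s0) /\
     (forall e, 0 < e -> exists2 s, S s & s0 - e < s).
    exists (sup S); split; first by move=> x Sx; apply: (ub_le_sup ubS).
    by move=> e' e'0; exact: sup_adherent.
  have s00 : 0 <= s0 := hs1 _ S0.
  have s0T : s0 <= T.
    rewrite leNgt; apply/negP => bs0.
    have [s [/andP[_ sb] _] ss0] := hs2 (s0 - T) ltac:(rewrite subr_gt0 //).
    by move: ss0; rewrite opprB addrCA subrr addr0 ltNge sb.
  have Klt : forall u, 0 <= u -> u < s0 -> K (phi u).
    move=> u u0 us0.
    have [s [_ Ss] hs] := hs2 (s0 - u) ltac:(rewrite subr_gt0 //).
    by apply: Ss; rewrite u0 /=; lra.
  have acT : abs_cont_on phi 0 T.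
    by apply: acD; [lra | move=> t /= ht; apply: D0T].
  have Ks0 : K (phi s0).
    have [->|s0n] := eqVneq s0 0; first exact: K0.
    have s0p : 0 < s0 by rewrite lt_neqAle eq_sym s0n s00.
    apply: (closure_small clK) => e e0.
    have e10 : 0 < Num.min 1 e by rewrite lt_min ltr01.
    have e11 : Num.min 1 e <= 1 by rewrite ge_min lexx.
    have e1e : Num.min 1 e <= e by rewrite ge_min lexx orbT.
    have [d [d0 Hd]] := ac_single acT e10.
    have m0 : 0 < Num.min s0 d by rewrite lt_min s0p.
    have m1 : Num.min s0 d <= s0 by rewrite ge_min lexx.
    have m2 : Num.min s0 d <= d by rewrite ge_min lexx orbT.
    exists (phi (s0 - Num.min s0 d / 2)); split.
      by apply: Klt; lra.
    have hn := Hd (s0 - Num.min s0 d / 2) s0 ltac:(lra) ltac:(lra) s0T ltac:(lra).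
    rewrite -enorm_sq expr2.
    have := enorm_ge0 (phi s0 - phi (s0 - Num.min s0 d / 2)).
    nra.
  have Ss0 : S s0.
    split; first by rewrite s00 s0T.
    move=> u /andP[u0 us0]; have [->|usn] := eqVneq u s0; first exact: Ks0.
    by apply: Klt => //; rewrite lt_neqAle usn us0.
  have s0T' : s0 = T.
    apply/eqP; rewrite eq_le s0T /= leNgt; apply/negP => s0T'.
    have [tau [tau0 tauT Ktau]] := local_step clK clC FC osl tang inC acD mA A0 HA D0T star
      s00 s0T' Ks0.
    have : S (s0 + tau).
      split; first by apply/andP; split; lra.
      move=> u /andP[u0 ut]; case: (lerP u s0) => us.
        by case: Ss0 => _; apply; rewrite u0 us.
      by apply: Ktau; apply/andP; split; lra.
    by move/hs1; lra.
  by move=> t ht; case: Ss0 => _; apply; rewrite s0T'.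
split.
- by move=> x [t ht <-]; exact: claim.
- move=> [T' [T'0 [subD hC]]].
  have h1 : 0 < Num.min T T' by rewrite lt_min T0.
  have h2 : Num.min T T' <= T by rewrite ge_min lexx.
  have h3 : Num.min T T' <= T' by rewrite ge_min lexx orbT.
  have [_ nK] := hC (Num.min T T') ltac:(by rewrite h1).
  by apply: nK; apply: claim; rewrite h2 ltW.
Qed.
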